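(* The variety $\mathsf V(M_2,S_c(ab))$ is finitely based; more precisely, it is the subvariety of $\mathbf F$ defined by the identities $x^3\approx x^2$, $xy\approx yx$ and $x_1x_2x_3\approx x_1^2+x_2^2+x_3^2$.
   Context: A flat semiring is an ai-semiring (semilattice $(S,+)$, semigroup $(S,\cdot)$, distributive laws) whose multiplicative reduct has a zero element $\infty$ and in which $x+y=\infty$ for all distinct $x,y$. $\mathbf F$ is the variety generated by all flat semirings. $M_2$ is the two-element flat semiring $\{1,\infty\}$ with $1\cdot1=1$. $S_c(ab)$ is the flat semiring $\{a,b,ab,\infty\}$ with $\infty$ a multiplicative zero, $ab=ba$ the element $ab$, and all other products ($a^2$, $b^2$, and any product with $ab$) equal to $\infty$. $\mathsf V(M_2,S_c(ab))$ is the variety generated by these two algebras. *)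

(* Defs.v *)
Record aisr : Type := AISR {
  carrier :> Type;
  sadd : carrier -> carrier -> carrier;
  smul : carrier -> carrier -> carrier;
  sadd_assoc : forall x y z, sadd x (sadd y z) = sadd (sadd x y) z;
  sadd_comm  : forall x y, sadd x y = sadd y x;
  sadd_idem  : forall x, sadd x x = x;
  smul_assoc : forall x y z, smul x (smul y z) = smul (smul x y) z;
  smul_addl  : forall x y z, smul x (sadd y z) = sadd (smul x y) (smul x z);
  smul_addr  : forall x y z, smul (sadd y z) x = sadd (smul y x) (smul z x)
}.

Definition flat (S : aisr) : Prop :=
  exists inf : S,
    (forall x : S, smul S inf x = inf /\ smul S x inf = inf) /\
    (forall x y : S, x <> y -> sadd S x y = inf).

Inductive term : Type :=
| Var : nat -> term
| Add : term -> term -> term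
| Mul : term -> term -> term.

Fixpoint eval (S : aisr) (env : nat -> S) (t : term) : S :=
  match t with
  | Var n => env n
  | Add t1 t2 => sadd S (eval S env t1) (eval S env t2)
  | Mul t1 t2 => smul S (eval S env t1) (eval S env t2)
  end.

Definition sat (S : aisr) (u v : term) : Prop :=
  forall env : nat -> S, eval S env u = eval S env v.

(** Membership in the variety generated by a class K of ai-semirings
    (equational description: S satisfies every identity valid in K). *)
Definition in_variety_gen (K : aisr -> Prop) (S : aisr) : Prop :=
  forall u v : term, (forall A : aisr, K A -> sat A u v) -> sat S u v.

Definition in_F (S : aisr) : Prop := in_variety_gen flat S.

Inductive m2 : Set := m2_one | m2_inf.

Definition m2_add (x y : m2) : m2 :=
  match x, y with m2_one, m2_one => m2_one | _, _ => m2_inf end.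
Definition m2_mul (x y : m2) : m2 :=
  match x, y with m2_one, m2_one => m2_one | _, _ => m2_inf end.

Definition M2 : aisr.
Proof.
  refine (@AISR m2 m2_add m2_mul _ _ _ _ _ _);
    intros; repeat match goal with x : m2 |- _ => destruct x end; reflexivity.
Defined.

Inductive scab : Set := sc_a | sc_b | sc_ab | sc_inf.

Definition scab_eqb (x y : scab) : bool :=
  match x, y with
  | sc_a, sc_a | sc_b, sc_b | sc_ab, sc_ab | sc_inf, sc_inf => true
  | _, _ => false
  end.

Definition scab_add (x y : scab) : scab := if scab_eqb x y then x else sc_inf.
Definition scab_mul (x y : scab) : scab :=
  match x, y with
  | sc_a, sc_b | sc_b, sc_a => sc_ab
  | _, _ => sc_inf
  end.

Definition Scab : aisr.
Proof.
  refine (@AISR scab scab_add scab_mul _ _ _ _ _ _);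
    intros; repeat match goal with x : scab |- _ => destruct x end; reflexivity.
Defined.

Definition K_M2_Scab (A : aisr) : Prop := A = M2 \/ A = Scab.

Definition x1 := Var 0.
Definition x2 := Var 1.
Definition x3 := Var 2.
Definition sq (t : term) := Mul t t.

Definition id_cube_l := Mul (sq x1) x1.
Definition id_cube_r := sq x1.
Definition id_comm_l := Mul x1 x2.
Definition id_comm_r := Mul x2 x1.
Definition id_3_l := Mul (Mul x1 x2) x3.
Definition id_3_r := Add (Add (sq x1) (sq x2)) (sq x3).

(* Main.v *)
From Stdlib Require Import List Classical ClassicalEpsilon FunctionalExtensionality PropExtensionality.
Import ListNotations.
Require Import Defs.

Notation "x ⊕ y" := (sadd _ x y) (at level 50, left associativity).
Notation "x ⊗ y" := (smul _ x y) (at level 40, left associativity).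

Definition le (A : aisr) (a b : A) := a ⊕ b = b.

Lemma le_refl (A : aisr) (a : A) : le A a a.
Proof. apply sadd_idem. Qed.
Lemma le_trans (A : aisr) (a b c : A) : le A a b -> le A b c -> le A a c.
Proof. unfold le; intros H1 H2. rewrite <- H2, sadd_assoc, H1. reflexivity. Qed.
Lemma le_addl (A : aisr) (a b : A) : le A a (a ⊕ b).
Proof. unfold le. rewrite sadd_assoc, sadd_idem. reflexivity. Qed.
Lemma le_addr (A : aisr) (a b : A) : le A b (a ⊕ b).
Proof. unfold le. rewrite (sadd_comm _ a b), sadd_assoc, sadd_idem. reflexivity. Qed.
Lemma add_lub (A : aisr) (a b c : A) : le A a c -> le A b c -> le A (a ⊕ b) c.
Proof. unfold le; intros H1 H2. rewrite <- sadd_assoc, H2, H1. reflexivity. Qed.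
Lemma le_antisym (A : aisr) (a b : A) : le A a b -> le A b a -> a = b.
Proof. unfold le; intros H1 H2. rewrite <- H1, <- H2 at 1. apply sadd_comm. Qed.

Lemma inf_addl (A : aisr) (inf : A) :
  (forall x y : A, x <> y -> x ⊕ y = inf) -> forall y, inf ⊕ y = inf.
Proof. intros Ha y. destruct (classic (inf = y)) as [<-|n]. apply sadd_idem. auto. Qed.

Lemma subst_flat (A : aisr) (H : flat A) (p q r r' : A) :
  (p = q -> r = r') -> p ⊕ q ⊕ r = p ⊕ q ⊕ r'.
Proof.
  intros E. destruct H as [inf [Hm Ha]].
  destruct (classic (p = q)) as [e|n].
  - rewrite (E e). reflexivity.
  - rewrite (Ha p q n), !(inf_addl A inf Ha). reflexivity.
Qed.

Lemma canc_flat (A : aisr) (H : flat A) (x y z r r' : A) :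
  (y = z -> r = r') -> x ⊗ y ⊕ x ⊗ z ⊕ r = x ⊗ y ⊕ x ⊗ z ⊕ r'.
Proof.
  intros E. destruct H as [inf [Hm Ha]].
  destruct (classic (y = z)) as [e|n].
  - rewrite (E e). reflexivity.
  - assert (Hs : x ⊗ y ⊕ x ⊗ z = inf).
    { destruct (classic (x ⊗ y = x ⊗ z)) as [e|n'].
      - assert (x ⊗ y = inf).
        { rewrite <- (sadd_idem _ (x ⊗ y)). rewrite e at 2.
          rewrite <- smul_addl, (Ha y z n). apply Hm. }
        rewrite <- e, H, sadd_idem. reflexivity.
      - auto. }
    rewrite Hs, !(inf_addl A inf Ha). reflexivity.
Qed.

Record good (A : aisr) : Prop := {
  g_comm : forall a b : A, a ⊗ b = b ⊗ a;
  g_cube : forall a : A, a ⊗ a ⊗ a = a ⊗ a;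
  g_three : forall a b c : A, a ⊗ b ⊗ c = a ⊗ a ⊕ b ⊗ b ⊕ c ⊗ c }.

Record goodF (A : aisr) : Prop := {
  gf_good : good A;
  gf1 : forall x y : A, x ⊕ x ⊗ y ⊕ x ⊗ y = x ⊕ x ⊗ y ⊕ x ⊗ y ⊗ y;
  gf2 : forall x y z w : A, y ⊗ x ⊕ y ⊗ z ⊕ z ⊗ w = y ⊗ x ⊕ y ⊗ z ⊕ x ⊗ w;
  gf3 : forall x : A, x ⊗ x ⊕ x ⊗ (x ⊗ x) ⊕ x = x ⊗ x ⊕ x ⊗ (x ⊗ x) ⊕ x ⊗ x;
  gf4 : forall x z : A, x ⊕ z ⊗ z ⊕ x ⊗ x = x ⊕ z ⊗ z ⊕ (z ⊗ z) ⊗ (z ⊗ z) }.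

Definition env4 (A : aisr) (a b c d : A) : nat -> A :=
  fun n => match n with 0 => a | 1 => b | 2 => c | _ => d end.

Lemma goodF_of (A : aisr) : in_F A -> good A -> goodF A.
Proof.
  intros HF G. split; [exact G| | | |].
  - intros x y.
    refine (HF (Add (Add (Var 0) (Mul (Var 0) (Var 1))) (Mul (Var 0) (Var 1)))
               (Add (Add (Var 0) (Mul (Var 0) (Var 1))) (Mul (Mul (Var 0) (Var 1)) (Var 1)))
               _ (env4 A x y x x)).
    intros B HB env. simpl. apply subst_flat; [exact HB|].
    intros E. rewrite <- E. exact E.
  - intros x y z w.
    refine (HF (Add (Add (Mul (Var 1) (Var 0)) (Mul (Var 1) (Var 2))) (Mul (Var 2) (Var 3)))
               (Add (Add (Mul (Var 1) (Var 0)) (Mul (Var 1) (Var 2))) (Mul (Var 0) (Var 3)))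
               _ (env4 A x y z w)).
    intros B HB env. simpl. apply canc_flat; [exact HB|].
    intros E. rewrite E. reflexivity.
  - intros x.
    refine (HF (Add (Add (Mul (Var 0) (Var 0)) (Mul (Var 0) (Mul (Var 0) (Var 0)))) (Var 0))
               (Add (Add (Mul (Var 0) (Var 0)) (Mul (Var 0) (Mul (Var 0) (Var 0)))) (Mul (Var 0) (Var 0)))
               _ (env4 A x x x x)).
    intros B HB env. simpl. apply canc_flat; [exact HB|]. auto.
  - intros x z.
    refine (HF (Add (Add (Var 0) (Mul (Var 1) (Var 1))) (Mul (Var 0) (Var 0)))
               (Add (Add (Var 0) (Mul (Var 1) (Var 1))) (Mul (Mul (Var 1) (Var 1)) (Mul (Var 1) (Var 1))))
               _ (env4 A x z x x)).
    intros B HB env. simpl. apply subst_flat; [exact HB|].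
    intros E. rewrite E. reflexivity.
Qed.


Lemma L1 (A : aisr) (H : goodF A) (x : A) : x ⊕ x ⊗ x = x ⊗ x.
Proof.
  pose proof (gf3 A H x) as E.
  rewrite smul_assoc, (g_cube A (gf_good A H)) in E.
  rewrite !sadd_idem in E. rewrite sadd_comm. exact E.
Qed.

Lemma sq4 (A : aisr) (G : good A) (z : A) : (z ⊗ z) ⊗ (z ⊗ z) = z ⊗ z.
Proof. rewrite smul_assoc, !(g_cube A G). reflexivity. Qed.

Lemma add_swap (A : aisr) (a b c : A) : a ⊕ b ⊕ c = a ⊕ c ⊕ b.
Proof. rewrite <- !sadd_assoc, (sadd_comm _ b c). reflexivity. Qed.

Lemma L2 (A : aisr) (H : goodF A) (x z : A) : x ⊕ z ⊗ z = x ⊗ x ⊕ z ⊗ z.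
Proof.
  pose proof (gf4 A H x z) as E.
  rewrite (sq4 A (gf_good A H)) in E.
  rewrite <- (sadd_assoc _ x (z ⊗ z) (z ⊗ z)), sadd_idem in E.
  rewrite <- E, add_swap, (L1 A H). reflexivity.
Qed.

Lemma L3 (A : aisr) (G : good A) (a b : A) : (a ⊗ b) ⊗ (a ⊗ b) = a ⊗ a ⊕ b ⊗ b.
Proof.
  assert (E : (a ⊗ b) ⊗ (a ⊗ b) = (a ⊗ a) ⊗ (b ⊗ b)).
  { rewrite !smul_assoc. f_equal.
    rewrite (g_comm A G (a ⊗ b) a), smul_assoc. reflexivity. }
  rewrite E, (g_three A G), sq4 by exact G. rewrite sadd_idem. reflexivity.
Qed.

Inductive atom : Type := AL (x : nat) | AP (x y : nat).

Definition evA (A : aisr) (env : nat -> A) (t : atom) : A :=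
  match t with AL x => env x | AP x y => env x ⊗ env y end.

Fixpoint sumL (A : aisr) (env : nat -> A) (l : list atom) : A :=
  match l with
  | [] => env 0
  | t :: l' => match l' with [] => evA A env t | _ => evA A env t ⊕ sumL A env l' end
  end.

Lemma in_le (A : aisr) env (l : list atom) t : In t l -> le A (evA A env t) (sumL A env l).
Proof.
  induction l as [|a l IH]; simpl; [tauto|].
  intros [<-|Hi]; destruct l as [|b m].
  - apply le_refl.
  - apply le_addl.
  - destruct Hi.
  - eapply le_trans; [apply IH; exact Hi| apply le_addr].
Qed.

Lemma sum_le (A : aisr) env (l : list atom) n :
  l <> [] -> (forall t, In t l -> le A (evA A env t) n) -> le A (sumL A env l) n.
Proof.
  induction l as [|a l IH]; [congruence|]. intros _ H.
  simpl. destruct l as [|b m].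
  - apply H; simpl; auto.
  - apply add_lub; [apply H; simpl; auto|]. apply IH; [discriminate|].
    intros t Ht; apply H; simpl; auto.
Qed.

Lemma sumL_const (A : aisr) env (l : list atom) c :
  l <> [] -> (forall t, In t l -> evA A env t = c) -> sumL A env l = c.
Proof.
  induction l as [|a l IH]; [congruence|]. intros _ H.
  simpl. destruct l as [|b m].
  - apply H; simpl; auto.
  - rewrite (H a) by (simpl; auto). rewrite IH; [apply sadd_idem|discriminate|].
    intros t Ht; apply H; simpl; auto.
Qed.

Lemma sumL_app (A : aisr) env (l m : list atom) :
  l <> [] -> m <> [] -> sumL A env (l ++ m) = sumL A env l ⊕ sumL A env m.
Proof.
  induction l as [|a l IH]; [congruence|]. intros _ Hm.
  destruct l as [|b l'].
  - simpl. destruct m; [congruence|]. reflexivity.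
  - change ((a :: b :: l') ++ m) with (a :: ((b :: l') ++ m)).
    change (sumL A env (a :: (b :: l') ++ m)) with (evA A env a ⊕ sumL A env ((b :: l') ++ m)).
    rewrite IH by (auto; discriminate). simpl. apply sadd_assoc.
Qed.

Definition varIn (x : nat) (t : atom) : Prop :=
  match t with AL y => x = y | AP y z => x = y \/ x = z end.

Definition InC (N : list atom) (x : nat) : Prop := exists s, In s N /\ varIn x s.

Inductive Deriv (N : list atom) : atom -> Prop :=
| d_in : forall t, In t N -> Deriv N t
| d_sqP : forall z x y, Deriv N (AP z z) -> InC N x -> InC N y -> Deriv N (AP x y)
| d_sqL : forall z x, Deriv N (AP z z) -> InC N x -> Deriv N (AL x)
| d_lp : forall x y, Deriv N (AL x) -> Deriv N (AP x y) -> Deriv N (AP x x)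
| d_sym : forall x y, Deriv N (AP x y) -> Deriv N (AP y x)
| d_r3 : forall x y z w, Deriv N (AP x y) -> Deriv N (AP y z) -> Deriv N (AP z w) ->
    Deriv N (AP x w).

Lemma sq_le_inv (A : aisr) (H : goodF A) (s z n : A) :
  le A (s ⊗ s) n -> le A (z ⊗ z) n -> le A s n.
Proof.
  intros H1 H2. apply le_trans with (s ⊕ z ⊗ z); [apply le_addl|].
  rewrite (L2 A H). apply add_lub; assumption.
Qed.

Lemma sq_le (A : aisr) (H : goodF A) (s z n : A) :
  le A s n -> le A (z ⊗ z) n -> le A (s ⊗ s) n.
Proof.
  intros H1 H2. apply le_trans with (s ⊕ z ⊗ z); [|apply add_lub; assumption].
  rewrite (L2 A H). apply le_addl.
Qed.

Lemma content_sq (A : aisr) (H : goodF A) env N x z :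
  InC N x -> le A (env z ⊗ env z) (sumL A env N) -> le A (env x ⊗ env x) (sumL A env N).
Proof.
  intros [s [Hs Hv]] Hz. pose proof (in_le A env N s Hs) as Hle.
  pose proof (sq_le A H _ _ _ Hle Hz) as Hq.
  destruct s as [y|y w]; simpl in Hv, Hq.
  - subst. exact Hq.
  - rewrite (L3 A (gf_good A H)) in Hq. destruct Hv; subst.
    + eapply le_trans; [apply le_addl|exact Hq].
    + eapply le_trans; [apply le_addr|exact Hq].
Qed.

Lemma sound (A : aisr) (H : goodF A) env N t :
  Deriv N t -> le A (evA A env t) (sumL A env N).
Proof.
  pose proof (gf_good A H) as G.
  induction 1 as [t Ht| z x y _ IH Hx Hy | z x _ IH Hx | x y _ IH1 _ IH2
                 | x y _ IH | x y z w _ IH1 _ IH2 _ IH3]; simpl in *.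
  - apply in_le; exact Ht.
  - pose proof (content_sq A H env N x z Hx IH).
    pose proof (content_sq A H env N y z Hy IH).
    apply (sq_le_inv A H _ (env z)); [|exact IH].
    rewrite (L3 A G). apply add_lub; assumption.
  - apply (sq_le_inv A H _ (env z)); [|exact IH].
    apply content_sq with z; assumption.
  - pose proof (gf1 A H (env x) (env y)) as E.
    rewrite (g_three A G) in E.
    apply le_trans with (env x ⊕ env x ⊗ env y ⊕ env x ⊗ env y).
    + rewrite E. eapply le_trans; [|apply le_addr].
      eapply le_trans; apply le_addl.
    + rewrite <- sadd_assoc, sadd_idem. apply add_lub; assumption.
  - rewrite (g_comm A G). exact IH.
  - pose proof (gf2 A H (env x) (env y) (env z) (env w)) as E.
    eapply le_trans; [apply (le_addr A (env y ⊗ env x ⊕ env y ⊗ env z))|].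
    rewrite <- E. repeat apply add_lub; try assumption.
    rewrite (g_comm A G). exact IH1.
Qed.

Definition mulAL (s t : atom) : list atom :=
  match s, t with
  | AL x, AL y => [AP x y]
  | AL x, AP y z => [AP x x; AP y y; AP z z]
  | AP x y, AL z => [AP x x; AP y y; AP z z]
  | AP x y, AP z w => [AP x x; AP y y; AP z z; AP w w]
  end.

Definition prodS (s : atom) (m : list atom) : list atom := flat_map (mulAL s) m.
Definition prodL (l m : list atom) : list atom := flat_map (fun s => prodS s m) l.

Fixpoint norm (u : term) : list atom :=
  match u with
  | Var n => [AL n]
  | Add u v => norm u ++ norm v
  | Mul u v => prodL (norm u) (norm v)
  end.

Lemma mulAL_ne s t : mulAL s t <> [].
Proof. destruct s, t; discriminate. Qed.

Lemma prodS_ne s m : m <> [] -> prodS s m <> [].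
Proof.
  destruct m as [|t m]; [congruence|]. intros _. unfold prodS; simpl.
  destruct (mulAL s t) eqn:E; [destruct (mulAL_ne s t E)|discriminate].
Qed.

Lemma prodL_ne l m : l <> [] -> m <> [] -> prodL l m <> [].
Proof.
  destruct l as [|s l]; [congruence|]. intros _ Hm. unfold prodL; simpl.
  destruct (prodS s m) eqn:E; [destruct (prodS_ne s m Hm E)|discriminate].
Qed.

Lemma norm_ne u : norm u <> [].
Proof.
  induction u; simpl; try discriminate.
  - destruct (norm u1); [congruence|discriminate].
  - apply prodL_ne; assumption.
Qed.

Lemma mulAL_sound (A : aisr) (G : good A) env s t :
  sumL A env (mulAL s t) = evA A env s ⊗ evA A env t.
Proof.
  destruct s as [x|x y], t as [z|z w]; simpl; try reflexivity.
  - rewrite smul_assoc, (g_three A G), sadd_assoc. reflexivity.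
  - rewrite (g_three A G), sadd_assoc. reflexivity.
  - rewrite (g_three A G), (L3 A G), !sadd_assoc. reflexivity.
Qed.

Lemma prodS_sound (A : aisr) (G : good A) env s m :
  m <> [] -> sumL A env (prodS s m) = evA A env s ⊗ sumL A env m.
Proof.
  induction m as [|t m IH]; [congruence|]. intros _.
  unfold prodS; simpl flat_map. destruct m as [|t' m'].
  - simpl flat_map. rewrite app_nil_r. apply mulAL_sound; exact G.
  - rewrite sumL_app; [|apply mulAL_ne|apply (prodS_ne s (t' :: m')); discriminate].
    fold (prodS s (t' :: m')). rewrite IH by discriminate.
    rewrite mulAL_sound by exact G.
    change (sumL A env (t :: t' :: m')) with (evA A env t ⊕ sumL A env (t' :: m')).
    rewrite smul_addl. reflexivity.
Qed.

Lemma prodL_sound (A : aisr) (G : good A) env l m :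
  l <> [] -> m <> [] -> sumL A env (prodL l m) = sumL A env l ⊗ sumL A env m.
Proof.
  induction l as [|s l IH]; [congruence|]. intros _ Hm.
  unfold prodL; simpl flat_map. destruct l as [|s' l'].
  - simpl flat_map. rewrite app_nil_r. apply prodS_sound; assumption.
  - rewrite sumL_app; [|apply prodS_ne; exact Hm|apply (prodL_ne (s' :: l')); [discriminate|exact Hm]].
    fold (prodL (s' :: l') m). rewrite IH by (auto; discriminate).
    rewrite prodS_sound by assumption.
    change (sumL A env (s :: s' :: l')) with (evA A env s ⊕ sumL A env (s' :: l')).
    rewrite smul_addr. reflexivity.
Qed.

Lemma norm_sound (A : aisr) (G : good A) env u : eval A env u = sumL A env (norm u).
Proof.
  induction u; simpl.
  - reflexivity.
  - rewrite sumL_app by apply norm_ne. congruence.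
  - rewrite prodL_sound by (auto; apply norm_ne). congruence.
Qed.

Definition EMI := excluded_middle_informative.

Lemma m2_part (N : list atom) (t : atom) :
  N <> [] -> (forall env, le M2 (evA M2 env t) (sumL M2 env N)) ->
  forall v, varIn v t -> InC N v.
Proof.
  intros Hne Hle v Hv. apply NNPP; intro Hn.
  set (env := fun w => if EMI (InC N w) then m2_one else m2_inf).
  specialize (Hle env).
  assert (Hs : sumL M2 env N = m2_one).
  { apply sumL_const; [exact Hne|]. intros s Hs.
    destruct s as [x|x y]; simpl; unfold env.
    - destruct (EMI (InC N x)) as [_|n]; [reflexivity|].
      exfalso; apply n; exists (AL x); simpl; auto.
    - destruct (EMI (InC N x)) as [_|n]; [|exfalso; apply n; exists (AP x y); simpl; auto].
      destruct (EMI (InC N y)) as [_|n]; [reflexivity|].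
      exfalso; apply n; exists (AP x y); simpl; auto. }
  assert (Ht : evA M2 env t = m2_inf).
  { destruct t as [x|x y]; simpl in *; unfold env.
    - subst. destruct (EMI (InC N x)); [contradiction|reflexivity].
    - destruct Hv; subst.
      + destruct (EMI (InC N x)); [contradiction|reflexivity].
      + destruct (EMI (InC N y)); [contradiction|]. destruct (EMI (InC N x)); reflexivity. }
  unfold le in Hle. rewrite Hs, Ht in Hle. discriminate.
Qed.

Definition tx (t : atom) := match t with AL x => x | AP x _ => x end.
Definition ty (t : atom) := match t with AL x => x | AP _ y => y end.

Lemma complete (N : list atom) (t : atom) :
  N <> [] ->
  (forall env, le M2 (evA M2 env t) (sumL M2 env N)) ->
  (forall env, le Scab (evA Scab env t) (sumL Scab env N)) ->
  Deriv N t.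
Proof.
  intros Hne HM HS. apply NNPP; intro Hnd.
  pose proof (m2_part N t Hne HM) as Hvars.
  set (Pd := fun x y => Deriv N (AP x y)).
  set (Ld := fun x => Deriv N (AL x)).
  assert (Hnosq : forall z, ~ Pd z z).
  { intros z Hz. apply Hnd. destruct t as [x|x y].
    - apply d_sqL with z; [exact Hz|]. apply Hvars; simpl; auto.
    - apply d_sqP with z; [exact Hz| |]; apply Hvars; simpl; auto. }
  assert (Psym : forall x y, Pd x y -> Pd y x) by (intros; apply d_sym; assumption).
  assert (P3 : forall x y z w, Pd x y -> Pd y z -> Pd z w -> Pd x w)
    by (intros; eapply d_r3; eassumption).
  set (conn := fun r v => r = v \/ Pd r v \/ exists w, Pd r w /\ Pd w v).
  assert (crefl : forall v, conn v v) by (intros; left; reflexivity).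
  assert (csym : forall a b, conn a b -> conn b a).
  { intros a b [e|[p|[w [p1 p2]]]]; unfold conn.
    - left; auto.
    - right; left; auto.
    - right; right; exists w; auto. }
  assert (ctrans : forall a b c, conn a b -> conn b c -> conn a c).
  { intros a b c [e|[p|[w [p1 p2]]]] [e'|[p'|[w' [p1' p2']]]]; unfold conn in *; subst;
    first [assumption | (left; reflexivity) | (right; left; assumption)
          | (right; right; eexists; split; eassumption)
          | (right; left; eapply P3; eassumption)
          | (right; right; exists w'; split; [eapply P3; eassumption| assumption])]. }
  assert (cP : forall a b, Pd a b -> conn a b) by (intros; right; left; auto).
  set (rep := fun v => epsilon (inhabits 0) (fun r => conn r v)).
  assert (rep_spec : forall v, conn (rep v) v).
  { intros v. unfold rep. apply epsilon_spec. exists v; auto. }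
  assert (rep_eq : forall v v', conn v v' -> rep v = rep v').
  { intros v v' C. unfold rep. f_equal. apply functional_extensionality. intros r.
    apply propositional_extensionality. split; intros; eauto. }
  set (x := tx t). set (y := ty t).
  set (rt := fun v => if EMI (conn x v) then x else if EMI (conn y v) then y else rep v).
  assert (rt_conn : forall v, conn (rt v) v).
  { intros v. unfold rt. destruct (EMI (conn x v)); auto. destruct (EMI (conn y v)); auto. }
  assert (rt_eq : forall v v', conn v v' -> rt v = rt v').
  { intros v v' C. unfold rt.
    destruct (EMI (conn x v)) as [c1|c1]; destruct (EMI (conn x v')) as [c2|c2];
      [reflexivity| exfalso; eauto | exfalso; eauto |].
    destruct (EMI (conn y v)) as [c3|c3]; destruct (EMI (conn y v')) as [c4|c4];
      [reflexivity| exfalso; eauto | exfalso; eauto |].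
    apply rep_eq; exact C. }
  set (env := fun v => if EMI (Ld v) then sc_ab else if EMI (Pd (rt v) v) then sc_b else sc_a).
  assert (noLP : forall u v, Pd u v -> ~ Ld u).
  { intros u v Puv Lu. apply (Hnosq u). apply d_lp with v; assumption. }
  assert (edge : forall u v, Pd u v -> scab_mul (env u) (env v) = sc_ab).
  { intros u v Puv.
    assert (nu := noLP u v Puv). assert (nv := noLP v u (Psym _ _ Puv)).
    assert (E : rt v = rt u) by (symmetry; apply rt_eq; auto).
    set (r := rt u) in *.
    assert (Cu : conn r u) by apply rt_conn.
    assert (Cv : conn r v) by (rewrite <- E; apply rt_conn).
    assert (X : (Pd r u /\ ~ Pd r v) \/ (~ Pd r u /\ Pd r v)).
    { destruct (classic (Pd r u)) as [a|a]; destruct (classic (Pd r v)) as [b|b]; auto.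
      - exfalso. apply (Hnosq r). apply P3 with u v; auto.
      - exfalso. destruct Cu as [e|[p|[w [p1 p2]]]].
        + apply b. rewrite e. exact Puv.
        + exact (a p).
        + apply b. apply P3 with w u; auto. }
    unfold env. destruct (EMI (Ld u)); [contradiction|]. destruct (EMI (Ld v)); [contradiction|].
    rewrite E. fold r.
    destruct X as [[a b]|[a b]].
    - destruct (EMI (Pd r u)); [|contradiction]. destruct (EMI (Pd r v)); [contradiction|]. reflexivity.
    - destruct (EMI (Pd r u)); [contradiction|]. destruct (EMI (Pd r v)); [|contradiction]. reflexivity. }
  assert (Hsum : sumL Scab env N = sc_ab).
  { apply sumL_const; [exact Hne|]. intros s Hs. destruct s as [u|u v]; simpl.
    - unfold env. destruct (EMI (Ld u)) as [_|n]; [reflexivity|].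
      exfalso; apply n; apply d_in; exact Hs.
    - apply edge. apply d_in; exact Hs. }
  specialize (HS env). unfold le in HS. rewrite Hsum in HS.
  assert (Ht : evA Scab env t = sc_ab).
  { revert HS. generalize (evA Scab env t). intros s HS. destruct s; try reflexivity; vm_compute in HS; discriminate. }
  clear HS.
  assert (envx : ~ Ld x -> env x = sc_a).
  { intros nx. unfold env. destruct (EMI (Ld x)); [contradiction|].
    assert (rt x = x) as ->. { unfold rt. destruct (EMI (conn x x)); [reflexivity|]. exfalso; auto. }
    destruct (EMI (Pd x x)); [exfalso; eapply Hnosq; eauto|reflexivity]. }
  destruct t as [x0|x0 y0]; simpl in Ht.
  - unfold x in envx; simpl in envx. destruct (classic (Ld x0)) as [l|nl].
    + apply Hnd. apply d_in. exfalso. apply Hnd. exact l.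
    + rewrite (envx nl) in Ht. discriminate.
  - unfold x, y in *; simpl in *.
    destruct (classic (Ld x0)) as [l|nl].
    + unfold env at 1 in Ht. destruct (EMI (Ld x0)); [|contradiction].
      destruct (env y0); discriminate.
    + rewrite (envx nl) in Ht.
      destruct (classic (Ld y0)) as [l'|nl'].
      * unfold env in Ht. destruct (EMI (Ld y0)); [discriminate|contradiction].
      * assert (env y0 = sc_a).
        { unfold env. destruct (EMI (Ld y0)); [contradiction|].
          unfold rt. destruct (EMI (conn x0 y0)).
          - destruct (EMI (Pd x0 y0)); [exfalso; apply Hnd; assumption|reflexivity].
          - destruct (EMI (conn y0 y0)); [|exfalso; auto].
            destruct (EMI (Pd y0 y0)); [exfalso; eapply Hnosq; eauto|reflexivity]. }
        rewrite H in Ht. discriminate.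
Qed.

Lemma flat_M2 : flat M2.
Proof.
  exists m2_inf. split.
  - intros x; destruct x; split; reflexivity.
  - intros x y H; destruct x, y; try reflexivity; congruence.
Qed.

Lemma flat_Scab : flat Scab.
Proof.
  exists sc_inf. split.
  - intros x; destruct x; split; reflexivity.
  - intros x y H; destruct x, y; try reflexivity; congruence.
Qed.

Definition env3 (A : aisr) (a b c : A) : nat -> A := env4 A a b c c.

Lemma good_of (A : aisr) :
  sat A id_cube_l id_cube_r -> sat A id_comm_l id_comm_r -> sat A id_3_l id_3_r -> good A.
Proof.
  intros H1 H2 H3. split.
  - intros a b. exact (H2 (env3 A a b b)).
  - intros a. exact (H1 (env3 A a a a)).
  - intros a b c. exact (H3 (env3 A a b c)).
Qed.

Lemma good_M2 : good M2.
Proof. split; intros; repeat match goal with x : carrier M2 |- _ => destruct x end; reflexivity. Qed.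
Lemma good_Scab : good Scab.
Proof. split; intros; repeat match goal with x : carrier Scab |- _ => destruct x end; reflexivity. Qed.

Lemma gens_sat (u v : term) : sat M2 u v -> sat Scab u v -> forall t,
  In t (norm v) -> Deriv (norm u) t.
Proof.
  intros HM HS t Ht. apply complete; [apply norm_ne| |].
  - intros env. rewrite <- (norm_sound M2 good_M2), (HM env), (norm_sound M2 good_M2).
    apply in_le; exact Ht.
  - intros env. rewrite <- (norm_sound Scab good_Scab), (HS env), (norm_sound Scab good_Scab).
    apply in_le; exact Ht.
Qed.

Theorem proposition3p15 :
  forall S : aisr,
    in_variety_gen K_M2_Scab S <->
    (in_F S /\ sat S id_cube_l id_cube_r /\ sat S id_comm_l id_comm_r
            /\ sat S id_3_l id_3_r).
Proof.
  intros S. split.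
  - intros HS. split; [|split; [|split]].
    + intros u v H. apply HS. intros A [->| ->]; apply H; [exact flat_M2|exact flat_Scab].
    + apply HS. intros A [->| ->]; intros env; simpl;
        repeat match goal with |- context [env ?n] => destruct (env n) end; reflexivity.
    + apply HS. intros A [->| ->]; intros env; simpl;
        repeat match goal with |- context [env ?n] => destruct (env n) end; reflexivity.
    + apply HS. intros A [->| ->]; intros env; simpl;
        repeat match goal with |- context [env ?n] => destruct (env n) end; reflexivity.
  - intros [HF [H1 [H2 H3]]]. pose proof (good_of S H1 H2 H3) as G.
    pose proof (goodF_of S HF G) as GF.
    intros u v Hgen env.
    assert (HM : sat M2 u v) by (apply Hgen; left; reflexivity).
    assert (HSc : sat Scab u v) by (apply Hgen; right; reflexivity).
    rewrite (norm_sound S G env u), (norm_sound S G env v).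
    apply le_antisym.
    + apply sum_le; [apply norm_ne|]. intros t Ht.
      apply sound; [exact GF|]. apply gens_sat with u; try assumption.
      intros e; symmetry; apply HM. intros e; symmetry; apply HSc.
    + apply sum_le; [apply norm_ne|]. intros t Ht.
      apply sound; [exact GF|]. apply gens_sat with v; assumption.
Qed.
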